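(* Let $\beta,\kappa\ge0$ and let $\gamma$ be a simple loop in $E_N$ with $\partial\hat\partial\gamma\subseteq E_N$. For each $e\in\gamma_1$ fix a plaquette $p_e\in\hat\partial e$. Then $$\mathbb E_{N,\beta,\kappa}\Bigl[\rho\Bigl(\sum_{e\in\gamma_1\setminus\gamma'}(d\sigma)_{p_e}\Bigr)\Bigr]=\mathbb E_{N,\beta,\kappa}\Bigl[\prod_{e\in\gamma_1\setminus\gamma'}\theta_{\beta,\kappa}\bigl(\sigma_e-(d\sigma)_{p_e}\bigr)\Bigr].$$
   Context: $G=\mathbb Z_n$, $\rho$ faithful unitary one-dimensional. On $\mathbb Z^4$: $E_N,P_N$ oriented edges/plaquettes with vertices in $B_N=[-N,N]^4\cap\mathbb Z^4$; $\partial p$ oriented boundary edges; $\hat\partial e=\{p:e\in\partial p\}$; $\partial\hat\partial\gamma=\bigcup_{e\in\gamma}\bigcup_{p\in\hat\partial e}\partial p$. $\Sigma_{E_N}$: $\sigma:E_N\to G$, $\sigma_{-e}=-\sigma_e$, $(d\sigma)_p=\sum_{e\in\partial p}\sigma_e$; $\mu_{N,\beta,\kappa}(\sigma)\propto\exp(\beta\sum_p\rho((d\sigma)_p)+\kappa\sum_e\rho(\sigma_e))$, expectation $\mathbb E_{N,\beta,\kappa}$. Simple loop: set $\gamma$ of oriented edges, $e\in\gamma\Rightarrow-e\notin\gamma$, orderable into an oriented loop. $\gamma_c$: edges of $\gamma$ sharing a plaquette with another edge of $\gamma\cup(-\gamma)$; $\gamma_1=\gamma\setminus\gamma_c$; $\gamma'=\gamma'(\sigma)$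 is the set of $e\in\gamma_1$ for which there are $p,p'\in\hat\partial e$ with $(d\sigma)_p\ne(d\sigma)_{p'}$. $\varphi_r(g)=e^{r(\mathrm{Re}\rho(g)-1)}$ and $\theta_{\beta,\kappa}(\hat g)=\frac{\sum_{g\in G}\rho(g)\varphi_\beta(g)^{12}\varphi_\kappa(g+\hat g)^2}{\sum_{g\in G}\varphi_\beta(g)^{12}\varphi_\kappa(g+\hat g)^2}$. *)

(* Defs.v *)
From HB Require Import structures.
From mathcomp Require Import all_boot all_order all_algebra.
From mathcomp Require Import boolp reals.
From mathcomp Require Import sequences exp.
From mathcomp Require Import complex.
Set Implicit Arguments. Unset Strict Implicit. Unset Printing Implicit Defensive.
Import Order.TTheory GRing.Theory Num.Theory.
Import ComplexField.
Local Open Scope ring_scope.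
Local Open Scope complex_scope.

Definition vtx := {ffun 'I_4 -> int}.
Definition shift (x : vtx) (i : 'I_4) : vtx := [ffun k => x k + (k == i)%:R].
Definition unshift (x : vtx) (i : 'I_4) : vtx := [ffun k => x k - (k == i)%:R].

(* oriented edge (x,i,b): if b, from x to x+e_i; if ~~b, from x+e_i to x *)
Definition oedge := (vtx * 'I_4 * bool)%type.
Definition eneg (e : oedge) : oedge := (e.1.1, e.1.2, ~~ e.2).
Definition estart (e : oedge) : vtx := if e.2 then e.1.1 else shift e.1.1 e.1.2.
Definition eend (e : oedge) : vtx := if e.2 then shift e.1.1 e.1.2 else e.1.1.

(* oriented plaquette (x,i,j), i != j: the square x, x+e_i, x+e_i+e_j, x+e_j
   traversed in that order; (x,j,i) is the same square with opposite orientation *)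
Definition plaq := (vtx * 'I_4 * 'I_4)%type.
Definition is_plaq (p : plaq) : bool := p.1.2 != p.2.
Definition bd (p : plaq) : seq oedge :=
  let: (x, i, j) := p in
  [:: (x, i, true); (shift x i, j, true); (shift x j, i, false); (x, j, false)].
Definition pverts (p : plaq) : seq vtx :=
  let: (x, i, j) := p in [:: x; shift x i; shift x j; shift (shift x i) j].
Definition hatbd (e : oedge) (p : plaq) : Prop := is_plaq p /\ e \in bd p.

Definition in_BN (N : nat) (x : vtx) : bool :=
  [forall k, (- (N%:Z) <= x k) && (x k <= N%:Z)].
Definition in_EN (N : nat) (e : oedge) : bool := in_BN N (estart e) && in_BN N (eend e).
Definition in_PN (N : nat) (p : plaq) : bool := is_plaq p && all (in_BN N) (pverts p).

Definition bcoord (N : nat) := {ffun 'I_4 -> 'I_(2 * N).+1}.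
Definition toV (N : nat) (c : bcoord N) : vtx := [ffun k => (c k : nat)%:Z - N%:Z].

(* positive (unoriented) edges of E_N: base point c and direction i with x+e_i in B_N *)
Definition posE (N : nat) := {a : bcoord N * 'I_4 | (a.1 a.2 < 2 * N)%N}.

(* Sigma_{E_N}: a configuration is given by its values on positively oriented
   edges of E_N; sigma_{-e} = - sigma_e then defines it on all of E_N *)
Definition config (n N : nat) := {ffun posE N -> 'Z_n}.

(* value sigma_e of the configuration at an oriented edge e (0 off E_N) *)
Definition sig_at (n N : nat) (s : config n N) (e : oedge) : 'Z_n :=
  \sum_(a : posE N | (toV (sval a).1, (sval a).2) == e.1)
     (if e.2 then s a else - s a).

Definition dsig (n N : nat) (s : config n N) (p : plaq) : 'Z_n :=
  \sum_(e <- bd p) sig_at s e.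

Section Measure.
Variables (R : realType) (n N : nat) (rho : 'Z_n -> R[i]) (beta kappa : R).

(* Re of  beta sum_{p in P_N} rho((d sigma)_p) + kappa sum_{e in E_N} rho(sigma_e)
   (this sum is real, since both orientations are summed) *)
Definition hamil (s : config n N) : R :=
  beta * \sum_(c : bcoord N) \sum_(i : 'I_4) \sum_(j : 'I_4)
      (if in_PN N (toV c, i, j) then complex.Re (rho (dsig s (toV c, i, j))) else 0)
  + kappa * \sum_(c : bcoord N) \sum_(i : 'I_4) \sum_(b : bool)
      (if in_EN N (toV c, i, b) then complex.Re (rho (sig_at s (toV c, i, b))) else 0).

Definition weight (s : config n N) : R := expR (hamil s).

Definition expect (f : config n N -> R[i]) : R[i] :=
  (\sum_(s : config n N) (weight s)%:C * f s) / (\sum_(s : config n N) weight s)%:C.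
End Measure.

Definition phi (R : realType) (n : nat) (rho : 'Z_n -> R[i]) (r : R) (g : 'Z_n) : R :=
  expR (r * (complex.Re (rho g) - 1)).

Definition theta (R : realType) (n : nat) (rho : 'Z_n -> R[i]) (beta kappa : R)
    (gh : 'Z_n) : R[i] :=
  (\sum_(g : 'Z_n) rho g * (phi rho beta g ^+ 12 * phi rho kappa (g + gh) ^+ 2)%:C)
  / (\sum_(g : 'Z_n) phi rho beta g ^+ 12 * phi rho kappa (g + gh) ^+ 2)%:C.

Definition simple_loop (gamma : seq oedge) : Prop :=
  uniq gamma /\ (forall e, e \in gamma -> eneg e \notin gamma) /\
  exists s, perm_eq s gamma /\ cycle (fun e f : oedge => eend e == estart f) s.

Definition in_gc (gamma : seq oedge) (e : oedge) : Prop :=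
  exists p e', is_plaq p /\ (e' \in gamma \/ eneg e' \in gamma) /\ e' != e /\
               e \in bd p /\ e' \in bd p.

Definition in_g1 (gamma : seq oedge) (e : oedge) : Prop := e \in gamma /\ ~ in_gc gamma e.

Definition in_gprime (n N : nat) (gamma : seq oedge) (s : config n N) (e : oedge) : Prop :=
  in_g1 gamma e /\ exists p p', hatbd e p /\ hatbd e p' /\ dsig s p != dsig s p'.

(* Main.v *)
Require Import Defs.
From HB Require Import structures.
From mathcomp Require Import all_boot all_order all_algebra.
From mathcomp Require Import boolp reals.
From mathcomp Require Import sequences exp.
From mathcomp Require Import complex.
From mathcomp Require Import zify ring lra.
Import Order.TTheory GRing.Theory Num.Theory.
Import ComplexField.
Local Open Scope ring_scope.
Set Implicit Arguments. Unset Strict Implicit. Unset Printing Implicit Defensive.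

Lemma shiftK (x : vtx) i : unshift (shift x i) i = x.
Proof. by apply/ffunP=> k; rewrite !ffunE addrK. Qed.
Lemma unshiftK (x : vtx) i : shift (unshift x i) i = x.
Proof. by apply/ffunP=> k; rewrite !ffunE subrK. Qed.
Lemma shiftC (x : vtx) i j : shift (shift x i) j = shift (shift x j) i.
Proof. by apply/ffunP=> k; rewrite !ffunE -!addrA [_%:R + _]addrC. Qed.
Lemma shift_neq (x : vtx) i : (shift x i == x) = false.
Proof.
apply/negbTE/eqP=> /ffunP /(_ i); rewrite ffunE eqxx => /eqP.
by rewrite -subr_eq0 addrC addKr oner_eq0.
Qed.
Lemma shift_eq (x y : vtx) i : (shift y i == x) = (y == unshift x i).
Proof.
apply/eqP/eqP=> [<-|->]; [by rewrite shiftK | by rewrite unshiftK].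
Qed.

Lemma toV_inj N : injective (@toV N).
Proof.
move=> c d /ffunP H; apply/ffunP=> k; move: (H k); rewrite !ffunE.
by move/addIr => [] /val_inj.
Qed.

Lemma toV_ex N (x : vtx) : in_BN N x -> exists c : bcoord N, toV c = x.
Proof.
move/forallP=> Hx.
exists [ffun k => inord (absz (x k + N%:Z))].
apply/ffunP=> k; rewrite !ffunE.
have /andP[H1 H2] := Hx k.
have h0 : 0 <= x k + N%:Z by lia.
rewrite inordK; last by rewrite -ltz_nat abszE ger0_norm //; lia.
by rewrite abszE ger0_norm // addrK.
Qed.

Definition pkey {N} (a : posE N) : vtx * 'I_4 := (toV (sval a).1, (sval a).2).

Lemma key_inj N : injective (@pkey N).
Proof.
move=> [[c i] Hc] [[d j] Hd]; rewrite /pkey /= => -[/toV_inj Hcd Hij].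
subst; congr exist; exact: bool_irrelevance.
Qed.

Lemma key_ex N (x : vtx) i : in_BN N x -> in_BN N (shift x i) ->
  exists a : posE N, pkey a = (x, i).
Proof.
move=> Hx /forallP /(_ i) /andP [_]; rewrite ffunE eqxx => Hs.
have Hs' : x i + 1 <= N%:Z by [].
have [c Hc] := @toV_ex N x Hx.
have Hci : (c i < 2 * N)%N.
  move/ffunP: Hc => /(_ i); rewrite ffunE => Hci.
  rewrite -Hci in Hs'; move: Hs'; generalize (nat_of_ord (c i)) => b; lia.
by exists (exist _ (c, i) Hci); rewrite /pkey /= Hc.
Qed.

Lemma in_EN_B N (e : oedge) : in_EN N e -> in_BN N e.1.1 /\ in_BN N (shift e.1.1 e.1.2).
Proof. by case: e => [[x i] []]; rewrite /in_EN /estart /eend /= => /andP[]. Qed.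

Definition delta {n} N (e0 : oedge) (g : 'Z_n) : config n N :=
  [ffun a => if pkey a == e0.1 then (if e0.2 then g else - g) else 0].

Lemma sig_atE n N (s : config n N) e :
  sig_at s e = \sum_(a : posE N | pkey a == e.1) (if e.2 then s a else - s a).
Proof. by []. Qed.

Lemma sig_at_shift n N (s : config n N) e0 g e : in_EN N e0 ->
  sig_at (s + delta N e0 g) e =
  sig_at s e + (if e == e0 then g else if e == eneg e0 then - g else 0).
Proof.
move=> /in_EN_B [H1 H2].
rewrite !sig_atE.
rewrite (eq_bigr (fun a => (if e.2 then s a else - s a) +
                           (if e.2 then delta N e0 g a else - delta N e0 g a))); last first.
  by move=> a _; rewrite ffunE; case: (e.2); rewrite ?opprD.
rewrite big_split /=; congr (_ + _).
case: (eqVneq e.1 e0.1) => He1.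
- have [a0 Ha0] := @key_ex N _ _ H1 H2.
  clear H1 H2; move: Ha0 He1; case: e => [[x i] b]; case: e0 => [[x0 i0] b0] /= Ha0 He1.
  rewrite (big_pred1 a0); last first.
    by move=> a /=; rewrite He1 -Ha0 (inj_eq (@key_inj N)).
  rewrite /delta ffunE Ha0 eqxx /=.
  move: He1 => [-> ->].
  by case: b; case: b0; rewrite /eneg /= ?xpair_eqE ?eqxx /= ?opprK.
- rewrite big1; last first.
    move=> a /eqP Ha; rewrite /delta ffunE Ha (negbTE He1).
    by case: (e.2); rewrite ?oppr0.
  have -> : (e == e0) = false.
    by apply/negbTE/eqP => Hee; move: He1; rewrite Hee /= eqxx.
  have -> : (e == eneg e0) = false.
    apply/negbTE/eqP => Hee; move: He1; rewrite Hee; clear; by case: e0 => [[? ?] ?]; rewrite /= eqxx.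
  by [].
Qed.

Definition prev (p : plaq) : plaq := (p.1.1, p.2, p.1.2).

Lemma is_plaq_prev p : is_plaq (prev p) = is_plaq p.
Proof. by case: p => [[x i] j]; rewrite /is_plaq /prev /= eq_sym. Qed.

Lemma eneg_inv e : eneg (eneg e) = e.
Proof. by case: e => [[x i] b]; rewrite /eneg /= negbK. Qed.

Lemma eneg_neq e : (eneg e == e) = false.
Proof. by case: e => [[x i] b]; rewrite /eneg /= xpair_eqE; case: b; rewrite /= andbF. Qed.

Lemma bd_prev p e : (e \in bd (prev p)) = (eneg e \in bd p).
Proof.
case: p => [[x i] j]; case: e => [[y k] b]; rewrite /prev /eneg /= !inE !xpair_eqE.
by case: b => /=; rewrite ?andbT ?andbF ?orbF ?orFb //= orbC.
Qed.

Lemma tfE : (true == false) = false. Proof. by []. Qed.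
Lemma ftE : (false == true) = false. Proof. by []. Qed.

Lemma bd_ok p : is_plaq p -> uniq (bd p) /\ (forall e, e \in bd p -> eneg e \notin bd p).
Proof.
case: p => [[x i] j]; rewrite /is_plaq /= => Hij.
have Hji : (j == i) = false by rewrite eq_sym (negbTE Hij).
split.
  rewrite /= !inE !xpair_eqE /= ?tfE ?ftE !eqxx (negbTE Hij) Hji.
  by rewrite !andbF.
move=> e; rewrite !inE => /or4P [] /eqP ->; rewrite /eneg /= !xpair_eqE /=;
  rewrite ?tfE ?ftE ?eqxx ?(negbTE Hij) ?Hji ?andbF ?andbT ?orbF ?orFb //.
all: by rewrite ?shift_neq ?(eq_sym x) ?shift_neq.
Qed.

Lemma sig_at_eneg n N (s : config n N) e : sig_at s (eneg e) = - sig_at s e.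
Proof.
rewrite !sig_atE -sumrN; case: e => [[x i] b] /=.
by apply: eq_bigr => a _; case: b; rewrite /= ?opprK.
Qed.

Lemma sig_at_F n N (s : config n N) x i : sig_at s (x, i, false) = - sig_at s (x, i, true).
Proof. by rewrite -sig_at_eneg. Qed.

Lemma dsig_prev n N (s : config n N) p : dsig s (prev p) = - dsig s p.
Proof.
case: p => [[x i] j]; rewrite /dsig /prev /= !big_cons big_nil !sig_at_F.
rewrite !addr0; ring.
Qed.

Definition fsh {n} (e0 : oedge) (g : 'Z_n) e :=
  if e == e0 then g else if e == eneg e0 then - g else 0.

Lemma dsig_shift n N (s : config n N) e0 g p : in_EN N e0 ->
  dsig (s + delta N e0 g) p = dsig s p + \sum_(e <- bd p) fsh e0 g e.
Proof.
move=> H; rewrite /dsig -big_split /=; apply: eq_bigr => e _.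
by rewrite sig_at_shift.
Qed.

Lemma sum_fsh0 n (r : seq oedge) e0 (g : 'Z_n) :
  e0 \notin r -> eneg e0 \notin r -> \sum_(e <- r) fsh e0 g e = 0.
Proof.
move=> H1 H2; rewrite big_seq big1 // => e He; rewrite /fsh.
have -> : (e == e0) = false by apply/negbTE; apply: contraNneq H1 => <-.
by have -> : (e == eneg e0) = false by apply/negbTE; apply: contraNneq H2 => <-.
Qed.

Lemma sum_fsh1 n (r : seq oedge) e0 (g : 'Z_n) :
  uniq r -> e0 \in r -> eneg e0 \notin r -> \sum_(e <- r) fsh e0 g e = g.
Proof.
move=> U H1 H2; rewrite (bigD1_seq e0) //= {1}/fsh eqxx.
rewrite big_seq_cond big1 ?addr0 // => e /andP [He Hne]; rewrite /fsh (negbTE Hne).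
by have -> : (e == eneg e0) = false by apply/negbTE; apply: contraNneq H2 => <-.
Qed.

Lemma sum_fshN n (r : seq oedge) e0 (g : 'Z_n) :
  uniq r -> eneg e0 \in r -> e0 \notin r -> \sum_(e <- r) fsh e0 g e = - g.
Proof.
move=> U H1 H2; rewrite (bigD1_seq (eneg e0)) //= {1}/fsh eqxx eneg_neq.
rewrite big_seq_cond big1 ?addr0 // => e /andP [He Hne]; rewrite /fsh (negbTE Hne).
by have -> : (e == e0) = false by apply/negbTE; apply: contraNneq H2 => <-.
Qed.

Lemma dsig_sh_in n N (s : config n N) e0 g p : in_EN N e0 -> hatbd e0 p ->
  dsig (s + delta N e0 g) p = dsig s p + g.
Proof.
move=> H [Hp He]; have [U Hn] := bd_ok Hp.
by rewrite dsig_shift // sum_fsh1 // Hn.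
Qed.

Lemma dsig_sh_neg n N (s : config n N) e0 g p : in_EN N e0 -> is_plaq p ->
  eneg e0 \in bd p -> dsig (s + delta N e0 g) p = dsig s p - g.
Proof.
move=> H Hp He; have [U Hn] := bd_ok Hp.
rewrite dsig_shift // sum_fshN //; by apply/negP => /Hn; rewrite He.


Qed.

Lemma dsig_sh_out n N (s : config n N) e0 g p : in_EN N e0 ->
  e0 \notin bd p -> eneg e0 \notin bd p -> dsig (s + delta N e0 g) p = dsig s p.
Proof. by move=> H H1 H2; rewrite dsig_shift // sum_fsh0 // addr0. Qed.

Lemma cond_pairs (x y : vtx) k i j b :
  (((x, k, b) \in bd (y, i, j)) || (eneg (x, k, b) \in bd (y, i, j))) =
  ((x, k) \in [:: (y, i); (shift y i, j); (shift y j, i); (y, j)]).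
Proof.
rewrite /eneg /= !inE !xpair_eqE.
case: b; rewrite /= ?tfE ?ftE ?eqxx ?andbT ?andbF ?orbF ?orFb /=.
  by case: (_ && _); case: (_ && _); case: (_ && _); case: (_ && _).
by case: (_ && _); case: (_ && _); case: (_ && _); case: (_ && _).
Qed.

Lemma in_EN_eneg N e : in_EN N (eneg e) = in_EN N e.
Proof. by case: e => [[x i] []]; rewrite /in_EN /eneg /estart /eend /= andbC. Qed.



Lemma sum_pred2 (T : finType) (a b : T) : a != b ->
  (\sum_(c : T) ((c == a) || (c == b) : nat) = 2)%N.
Proof.
move=> Hab; rewrite (bigD1 a) //= eqxx /= (bigD1 b) /=; last by rewrite eq_sym.
rewrite eqxx orbT big1 // => c /andP [H1 H2].
by rewrite (negbTE H1) (negbTE H2).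
Qed.

Lemma sum_pred1 (T : finType) (a : T) : (\sum_(c : T) ((c == a) : nat) = 1)%N.
Proof.
rewrite (bigD1 a) //= eqxx /= big1 // => c H1.
by rewrite (negbTE H1).
Qed.

Lemma sum_toV1 N (x : vtx) : in_BN N x -> (\sum_(c : bcoord N) ((toV c == x) : nat) = 1)%N.
Proof.
move=> /(@toV_ex N) [c0 <-].
rewrite (eq_bigr (fun c => ((c == c0) : nat))); first exact: sum_pred1.
by move=> c _; rewrite (inj_eq (@toV_inj N)).
Qed.

Lemma sum_toV2 N (x y : vtx) : in_BN N x -> in_BN N y -> x != y ->
  (\sum_(c : bcoord N) (((toV c == x) || (toV c == y)) : nat) = 2)%N.
Proof.
move=> /(@toV_ex N) [c0 <-] /(@toV_ex N) [c1 <-] Hne.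
rewrite (eq_bigr (fun c => (((c == c0) || (c == c1)) : nat))).
  by apply: sum_pred2; apply: contraNneq Hne => ->.
by move=> c _; rewrite !(inj_eq (@toV_inj N)).
Qed.

Lemma count_4 (k : 'I_4) :
  (\sum_(i < 4) \sum_(j < 4) ((i != j) * (2 * ((k == i) + (k == j)))) = 12)%N.
Proof.
rewrite !big_ord_recr !big_ord0 /=.
by case: k => [[|[|[|[|?]]]] ?].
Qed.

Section Box.
Variables (N : nat) (gamma : seq oedge).
Hypothesis Hbd : forall e p e', e \in gamma -> hatbd e p -> e' \in bd p -> in_EN N e'.

Lemma plaq_edges_EN e0 p : e0 \in gamma -> is_plaq p ->
  (e0 \in bd p) || (eneg e0 \in bd p) -> forall e', e' \in bd p -> in_EN N e'.
Proof.
move=> Hg Hp /orP [H|H] e' He'.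
  exact: (Hbd Hg (conj Hp H) He').
rewrite -in_EN_eneg; apply: (Hbd (p := prev p) Hg).
  by split; rewrite ?is_plaq_prev // bd_prev.
by rewrite bd_prev eneg_inv.
Qed.

Lemma in_PN_of e0 p : e0 \in gamma -> is_plaq p ->
  (e0 \in bd p) || (eneg e0 \in bd p) -> in_PN N p.
Proof.
move=> Hg Hp Hc; have H := plaq_edges_EN Hg Hp Hc.
rewrite /in_PN Hp /=; move: H; case: p {Hp Hc} => [[x i] j] H.
have /andP [H1 H2] := H _ (mem_head _ _).
have /andP [H3 H4] : in_EN N (shift x i, j, true) by apply: H; rewrite !inE eqxx orbT.
have /andP [H5 H6] : in_EN N (x, j, false) by apply: H; rewrite !inE eqxx !orbT.
by rewrite /= H1 H2 H4 H5.
Qed.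

Lemma box_unshift x k b j : (x, k, b) \in gamma -> j != k -> in_BN N (unshift x j).
Proof.
move=> Hg Hjk.
have Hq : is_plaq (unshift x j, k, j) by rewrite /is_plaq /= eq_sym.
have Hc : ((x, k, b) \in bd (unshift x j, k, j)) || (eneg (x, k, b) \in bd (unshift x j, k, j)).
  by rewrite cond_pairs unshiftK !inE eqxx !orbT.
have := plaq_edges_EN Hg Hq Hc (mem_head _ _).
by rewrite /in_EN /estart /= => /andP [].
Qed.

Lemma count_plaq x k b : (x, k, b) \in gamma -> in_EN N (x, k, b) ->
  (\sum_(c : bcoord N) \sum_(i : 'I_4) \sum_(j : 'I_4)
     ((is_plaq (toV c, i, j) &&
       (((x, k, b) \in bd (toV c, i, j)) || (eneg (x, k, b) \in bd (toV c, i, j)))) : nat)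
   = 12)%N.
Proof.
move=> Hg /in_EN_B [Hx _]; move: Hx => /= Hx.
rewrite exchange_big /= (eq_bigr (fun i => \sum_(j < 4) ((i != j) * (2 * ((k == i) + (k == j)))))%N);
  first exact: count_4.
move=> i _; rewrite exchange_big /=; apply: eq_bigr => j _.
rewrite /is_plaq /=.
case: (eqVneq i j) => [<-|Hij] /=.
  by rewrite big1.
rewrite mul1n.
under eq_bigr do rewrite cond_pairs !inE !xpair_eqE.
case: (eqVneq k i) => [Hki|Hki].
- subst k; have Hkj : (i == j) = false by apply/negbTE.
  rewrite Hkj /=.
  under eq_bigr do rewrite !andbT !andbF !orbF eq_sym (eq_sym x) shift_eq.
  rewrite sum_toV2 //; first by apply: (box_unshift Hg); rewrite eq_sym.
  by apply/eqP => Hx'; move: (shift_neq x j); rewrite {1}Hx' unshiftK eqxx.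
case: (eqVneq k j) => [Hkj|Hkj].
- subst k; rewrite /=.
  under eq_bigr do rewrite ?andbT ?andbF ?orbF ?orFb (eq_sym x (shift _ _)) shift_eq (eq_sym x) orbC.
  rewrite sum_toV2 //; first exact: (box_unshift Hg Hij).
  by apply/eqP => Hx'; move: (shift_neq x i); rewrite {1}Hx' unshiftK eqxx.
rewrite /= big1 // => c _.
by rewrite !andbF.
Qed.
End Box.

Lemma sum3_split (R : nmodType) (I J K : finType) (F G : I -> J -> K -> R) :
  \sum_i \sum_j \sum_k (F i j k + G i j k) =
  \sum_i \sum_j \sum_k F i j k + \sum_i \sum_j \sum_k G i j k.
Proof.
rewrite -big_split; apply: eq_bigr => i _.
rewrite -big_split; apply: eq_bigr => j _.
by rewrite -big_split.
Qed.

Lemma sum3_nat (R : pzRingType) (I J K : finType) (F : I -> J -> K -> nat) (D : R) :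
  \sum_i \sum_j \sum_k ((F i j k)%:R * D) = (\sum_i \sum_j \sum_k F i j k)%:R * D.
Proof.
rewrite natr_sum mulr_suml; apply: eq_bigr => i _.
rewrite natr_sum mulr_suml; apply: eq_bigr => j _.
by rewrite natr_sum mulr_suml.
Qed.

Lemma Re_inv_unit (R : realType) (z w : R[i]) : `|z| = 1 -> z * w = 1 -> complex.Re w = complex.Re z.
Proof.
case: z => a b; case: w => c d; rewrite normc_def /= => Hn Hm.
have Hs : Num.sqrt (a ^+ 2 + b ^+ 2) = 1 by case: Hn.
have H1 : a ^+ 2 + b ^+ 2 = 1.
  by rewrite -[LHS]sqr_sqrtr ?Hs ?expr1n // addr_ge0 // sqr_ge0.
move: Hm => [E1 E2].
have -> : c = c * (a ^+ 2 + b ^+ 2) by rewrite H1 mulr1.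
have -> : c * (a ^+ 2 + b ^+ 2) = a * (a * c - b * d) + b * (a * d + b * c) by ring.
by rewrite E1 E2; ring.
Qed.

Section Ham.
Variables (R : realType) (n N : nat) (rho : 'Z_n -> R[i]) (beta kappa : R).
Hypothesis Hhom : forall a b : 'Z_n, rho (a + b) = rho a * rho b.
Hypothesis Hnorm : forall g : 'Z_n, `|rho g| = 1.
Variable gamma : seq oedge.
Hypothesis Hbd : forall e p e', e \in gamma -> hatbd e p -> e' \in bd p -> in_EN N e'.

Lemma rho0 : rho 0 = 1.
Proof.
have H := Hhom 0 0; rewrite addr0 in H.
have Hn : rho 0 != 0 by apply/eqP => H0; move: (Hnorm 0); rewrite H0 normr0 => /eqP; rewrite eq_sym oner_eq0.
by apply: (mulfI Hn); rewrite -H mulr1.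
Qed.

Lemma ReRhoN x : complex.Re (rho (- x)) = complex.Re (rho x).
Proof. by apply: Re_inv_unit => //; rewrite -Hhom subrr rho0. Qed.

Definition Pham (s : config n N) : R :=
  \sum_(c : bcoord N) \sum_(i : 'I_4) \sum_(j : 'I_4)
      (if in_PN N (toV c, i, j) then complex.Re (rho (dsig s (toV c, i, j))) else 0).
Definition Eham (s : config n N) : R :=
  \sum_(c : bcoord N) \sum_(i : 'I_4) \sum_(b : bool)
      (if in_EN N (toV c, i, b) then complex.Re (rho (sig_at s (toV c, i, b))) else 0).

Lemma hamilE s : hamil rho beta kappa s = beta * Pham s + kappa * Eham s.
Proof. by []. Qed.

Lemma Pham_shift (s : config n N) e0 g h : e0 \in gamma -> in_EN N e0 ->
  (forall p, hatbd e0 p -> dsig s p = h) ->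
  Pham (s + delta N e0 g) = Pham s + 12%:R * (complex.Re (rho (h + g)) - complex.Re (rho h)).
Proof.
move=> Hg HE Hall.
set D := (complex.Re (rho (h + g)) - complex.Re (rho h)).
have Hterm : forall p : plaq,
  (if in_PN N p then complex.Re (rho (dsig (s + delta N e0 g) p)) else 0) =
  (if in_PN N p then complex.Re (rho (dsig s p)) else 0) +
  ((is_plaq p && ((e0 \in bd p) || (eneg e0 \in bd p))) : nat)%:R * D.
  move=> p.
  case Hp: (is_plaq p); last first.
    by rewrite /in_PN Hp andFb mul0r addr0.
  case Hc: ((e0 \in bd p) || (eneg e0 \in bd p)); last first.
    move/negbT: Hc; rewrite negb_or => /andP [H1 H2].
    by rewrite dsig_sh_out // andbF mul0r addr0.
  rewrite (in_PN_of Hbd Hg Hp Hc) andTb mul1r.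
  case He: (e0 \in bd p).
    have Hh : hatbd e0 p by split.
    by rewrite dsig_sh_in // (Hall p Hh) /D [RHS]addrC subrK.
  move: Hc; rewrite He orFb => Hn.
  have Hq : hatbd e0 (prev p) by split; rewrite ?is_plaq_prev // bd_prev.
  have Hd : dsig s p = - h by rewrite -(Hall _ Hq) dsig_prev opprK.
  rewrite dsig_sh_neg // Hd -opprD !ReRhoN /D.
  by rewrite [RHS]addrC subrK.
rewrite /Pham.
rewrite (eq_bigr (fun c => \sum_i \sum_j ((if in_PN N (toV c, i, j) then complex.Re (rho (dsig s (toV c, i, j))) else 0) +
   ((is_plaq (toV c, i, j) && ((e0 \in bd (toV c, i, j)) || (eneg e0 \in bd (toV c, i, j)))) : nat)%:R * D))); last first.
  by move=> c _; apply: eq_bigr => i _; apply: eq_bigr => j _; rewrite Hterm.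
rewrite sum3_split sum3_nat; congr (_ + _%:R * _).
move: Hg HE; case: e0 {Hall Hterm} => [[x k] b] Hg HE.
exact: (count_plaq Hbd Hg HE).
Qed.

Lemma count_edge (x : vtx) (k : 'I_4) : in_BN N x ->
  (\sum_(c : bcoord N) \sum_(i : 'I_4) \sum_(b : bool) (((toV c == x) && (i == k)) : nat) = 2)%N.
Proof.
move=> Hx.
rewrite (eq_bigr (fun c => 2 * ((toV c == x) : nat)))%N; last first.
  move=> c _.
  rewrite (eq_bigr (fun i => 2 * (((toV c == x) && (i == k)) : nat)))%N; last first.
    by move=> i _; rewrite big_bool /= addnn -mul2n.
  rewrite -big_distrr /=; congr (2 * _)%N.
  case: (toV c == x) => /=; last by rewrite big1.
  exact: sum_pred1.
by rewrite -big_distrr /= sum_toV1.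
Qed.

Lemma Eham_shift (s : config n N) x k b0 g : in_EN N (x, k, b0) ->
  Eham (s + delta N (x, k, b0) g) = Eham s +
    2%:R * (complex.Re (rho (sig_at s (x, k, b0) + g)) - complex.Re (rho (sig_at s (x, k, b0)))).
Proof.
move=> HE.
set D := (complex.Re (rho (sig_at s (x, k, b0) + g)) - complex.Re (rho (sig_at s (x, k, b0)))).
have Hterm : forall (y : vtx) (i : 'I_4) (b : bool),
  (if in_EN N (y, i, b) then complex.Re (rho (sig_at (s + delta N (x, k, b0) g) (y, i, b))) else 0) =
  (if in_EN N (y, i, b) then complex.Re (rho (sig_at s (y, i, b))) else 0) +
  (((y == x) && (i == k)) : nat)%:R * D.
  move=> y i b; rewrite sig_at_shift //.
  case: (eqVneq y x) => [->|Hyx]; last first.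
    rewrite /= mul0r addr0.
    have -> : ((y, i, b) == (x, k, b0)) = false by rewrite !xpair_eqE (negbTE Hyx).
    by rewrite /eneg /= !xpair_eqE (negbTE Hyx) /= addr0.
  case: (eqVneq i k) => [->|Hik]; last first.
    rewrite andbF mul0r addr0.
    have -> : ((x, i, b) == (x, k, b0)) = false by rewrite !xpair_eqE (negbTE Hik) andbF.
    by rewrite /eneg /= !xpair_eqE (negbTE Hik) /= andbF addr0.
  rewrite /= mul1r.
  case: (eqVneq b b0) => [->|Hb].
    by rewrite eqxx HE /D [RHS]addrC subrK.
  have Hbb : b = ~~ b0 by move: Hb; case: b; case: (b0).
  have Hne : (eneg (x, k, b0)) = (x, k, b) by rewrite /eneg Hbb.
  have -> : ((x, k, b) == (x, k, b0)) = false by rewrite !xpair_eqE (negbTE Hb) ?andbT ?andbF.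
  rewrite -Hne eqxx in_EN_eneg HE sig_at_eneg -opprD !ReRhoN.
  by rewrite /D [RHS]addrC subrK.
rewrite /Eham.
rewrite (eq_bigr (fun c => \sum_i \sum_b ((if in_EN N (toV c, i, b) then complex.Re (rho (sig_at s (toV c, i, b))) else 0) +
   (((toV c == x) && (i == k)) : nat)%:R * D))); last first.
  by move=> c _; apply: eq_bigr => i _; apply: eq_bigr => b _; rewrite Hterm.
rewrite sum3_split sum3_nat; congr (_ + _%:R * _).
apply: count_edge; exact: (proj1 (in_EN_B HE)).
Qed.
End Ham.

Lemma big_D1_cond (R : Type) (idx : R) (op : Monoid.com_law idx) (I : eqType)
  (r : seq I) (j : I) (P : pred I) (F : I -> R) : j \in r -> uniq r ->
  \big[op/idx]_(i <- r | P i) F i =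
  op (if P j then F j else idx) (\big[op/idx]_(i <- r | (i != j) && P i) F i).
Proof. by move=> Hj U; rewrite big_mkcond (bigD1_seq j) //= -big_mkcondr. Qed.

Section Main.
Local Open Scope complex_scope.
Variables (R : realType) (n N : nat) (rho : 'Z_n -> R[i]) (beta kappa : R)
  (gamma : seq oedge) (pe : oedge -> plaq).
Hypothesis Hn : (1 < n)%N.
Hypothesis Hhom : forall a b : 'Z_n, rho (a + b) = rho a * rho b.
Hypothesis Hnorm : forall g : 'Z_n, `|rho g| = 1.
Hypothesis Hsl : simple_loop gamma.
Hypothesis HEg : forall e, e \in gamma -> in_EN N e.
Hypothesis Hbd : forall e p e', e \in gamma -> hatbd e p -> e' \in bd p -> in_EN N e'.
Hypothesis Hpe : forall e, in_g1 gamma e -> hatbd e (pe e).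

Lemma Huniq : uniq gamma. Proof. by case: Hsl. Qed.
Lemma Hnoneg e : e \in gamma -> eneg e \notin gamma. Proof. by case: Hsl => _ [H _]; apply: H. Qed.

Lemma locality e0 e p : e0 \in gamma -> in_g1 gamma e -> e != e0 -> hatbd e p ->
  e0 \notin bd p /\ eneg e0 \notin bd p.
Proof.
move=> H0 [He Hgc] Hne [Hp Hep]; split; apply/negP => Hb; apply: Hgc.
  by exists p, e0; split => //; split; [left | split; rewrite // eq_sym].
exists p, (eneg e0); split => //; split; first by right; rewrite eneg_inv.
split => //; apply/eqP => Heq; move: (Hnoneg H0); by rewrite Heq He.
Qed.

Lemma dsig_hat (s : config n N) e0 g e p : e0 \in gamma -> in_g1 gamma e -> hatbd e p ->
  dsig (s + delta N e0 g) p = dsig s p + (if e == e0 then g else 0).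
Proof.
move=> H0 He Hp; case: (eqVneq e e0) => [<-|Hne].
  by rewrite dsig_sh_in // HEg //; case: He.
have [H1 H2] := locality H0 He Hne Hp.
by rewrite dsig_sh_out ?HEg // addr0.
Qed.

Lemma sig_hat (s : config n N) e0 g e : e0 \in gamma -> e \in gamma ->
  sig_at (s + delta N e0 g) e = sig_at s e + (if e == e0 then g else 0).
Proof.
move=> H0 He; rewrite sig_at_shift ?HEg //; case: (e == e0) => //.
have -> // : (e == eneg e0) = false.
by apply/negbTE; apply/eqP => Heq; move: (Hnoneg H0); rewrite -Heq He.
Qed.

Definition Sb (s : config n N) e : bool := `[< in_g1 gamma e /\ ~ in_gprime gamma s e >].

Lemma Sb_shift (s : config n N) e0 g e : e0 \in gamma -> Sb (s + delta N e0 g) e = Sb s e.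
Proof.
move=> H0; apply: asbool_equiv_eq.
suff H : in_g1 gamma e -> (in_gprime gamma (s + delta N e0 g) e <-> in_gprime gamma s e).
  by split => -[H1 H2]; split => // H3; apply: H2; apply/(H H1).
move=> He; rewrite /in_gprime; split => -[_ [p [p' [Hp [Hp' Hd]]]]]; split => //;
  exists p, p'; do 2 (split => //); move: Hd; rewrite (dsig_hat s g H0 He Hp) (dsig_hat s g H0 He Hp') (inj_eq (addIr _)); exact: id.
Qed.

Lemma sum_shiftZ (V : nmodType) (h : 'Z_n) (f : 'Z_n -> V) :
  \sum_(g : 'Z_n) f (h + g) = \sum_(g : 'Z_n) f g.
Proof. by symmetry; apply: (reindex_inj (addrI h)). Qed.

Lemma Sb_all (s : config n N) e0 p : Sb s e0 -> hatbd e0 p -> dsig s p = dsig s (pe e0).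
Proof.
move=> /asboolP [Hg1 Hnp] Hp; apply/eqP; apply/negPn/negP => Hne; apply: Hnp.
by split => //; exists p, (pe e0); split => //; split => //; exact: Hpe.
Qed.

Lemma weight_shift (s : config n N) x k b0 g : (x, k, b0) \in gamma -> Sb s (x, k, b0) ->
  let e0 := (x, k, b0) in let h := dsig s (pe e0) in let sg := sig_at s e0 in
  weight rho beta kappa (s + delta N e0 g) =
  expR (hamil rho beta kappa s - 12%:R * (beta * (complex.Re (rho h) - 1))
        - 2%:R * (kappa * (complex.Re (rho sg) - 1))) *
  (phi rho beta (h + g) ^+ 12 * phi rho kappa ((h + g) + (sg - h)) ^+ 2).
Proof.
move=> Hg HS e0 h sg.
have HE := HEg Hg.
have Hall : forall p, hatbd e0 p -> dsig s p = h by move=> p Hp; exact: Sb_all HS Hp.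
rewrite /weight hamilE (Pham_shift Hhom Hnorm Hbd g Hg HE Hall) (Eham_shift Hhom Hnorm s g HE).
rewrite -/sg /phi -!expRM_natl -!expRD.
have -> : h + g + (sg - h) = sg + g by rewrite addrC addrA subrK.
congr expR; rewrite hamilE; ring.
Qed.

Lemma key_sum (s : config n N) x k b0 : (x, k, b0) \in gamma -> Sb s (x, k, b0) ->
  let e0 := (x, k, b0) in let h := dsig s (pe e0) in let sg := sig_at s e0 in
  \sum_(g : 'Z_n) (weight rho beta kappa (s + delta N e0 g))%:C * rho (h + g) =
  theta rho beta kappa (sg - h) * \sum_(g : 'Z_n) (weight rho beta kappa (s + delta N e0 g))%:C.
Proof.
move=> Hg HS e0 h sg.
pose K := expR (hamil rho beta kappa s - 12%:R * (beta * (complex.Re (rho h) - 1)) - 2%:R * (kappa * (complex.Re (rho sg) - 1))).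
set psi := fun u : 'Z_n => phi rho beta u ^+ 12 * phi rho kappa (u + (sg - h)) ^+ 2.
have Hw : forall g, weight rho beta kappa (s + delta N e0 g) = K * psi (h + g).
  by move=> g; rewrite (weight_shift g Hg HS).
under eq_bigr do rewrite Hw.
under [X in _ = _ * X]eq_bigr do rewrite Hw.
rewrite (sum_shiftZ h (fun u => (K * psi u)%:C * rho u)).
rewrite (sum_shiftZ h (fun u => (K * psi u)%:C)).
have Hpsi : forall u, 0 < psi u.
  by move=> u; rewrite /psi mulr_gt0 // exprn_gt0 // /phi expR_gt0.
have HB : (\sum_(u : 'Z_n) psi u) != 0.
  rewrite (bigD1 0) //=; apply/lt0r_neq0.
  have h1 := Hpsi 0.
  have h2 : 0 <= \sum_(u | u != 0) psi u by apply: sumr_ge0 => u _; apply/ltW.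
  lra.
have HBc : ((\sum_(u : 'Z_n) psi u)%:C : R[i]) != 0.
  by rewrite (fmorph_eq0 (real_complex R)).
have E1 : \sum_(u : 'Z_n) (K * psi u)%:C * rho u = K%:C * \sum_(u : 'Z_n) rho u * (psi u)%:C.
  rewrite mulr_sumr; apply: eq_bigr => u _.
  by rewrite rmorphM -mulrA [_ * rho u]mulrC.
have E2 : \sum_(u : 'Z_n) (K * psi u)%:C = K%:C * (\sum_(u : 'Z_n) psi u)%:C.
  by rewrite rmorph_sum mulr_sumr; apply: eq_bigr => u _; rewrite rmorphM.
rewrite E1 E2 /theta -/psi.
by rewrite mulrCA divfK.
Qed.

Definition Fq (Q : pred oedge) (s : config n N) : R[i] :=
  rho (\sum_(e <- gamma | Sb s e && ~~ Q e) dsig s (pe e)) *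
  \prod_(e <- gamma | Sb s e && Q e) theta rho beta kappa (sig_at s e - dsig s (pe e)).

Definition R1 e0 (Q : pred oedge) (s : config n N) : 'Z_n :=
  \sum_(e <- gamma | (e != e0) && (Sb s e && ~~ Q e)) dsig s (pe e).
Definition R2 e0 (Q : pred oedge) (s : config n N) : R[i] :=
  \prod_(e <- gamma | (e != e0) && (Sb s e && Q e)) theta rho beta kappa (sig_at s e - dsig s (pe e)).

Lemma Fq_decomp Q s e0 : e0 \in gamma ->
  Fq Q s = rho ((if Sb s e0 && ~~ Q e0 then dsig s (pe e0) else 0) + R1 e0 Q s) *
           ((if Sb s e0 && Q e0 then theta rho beta kappa (sig_at s e0 - dsig s (pe e0)) else 1)
            * R2 e0 Q s).
Proof.
move=> H0; rewrite /Fq /R1 /R2.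
congr (rho _ * _).
  by rewrite (big_D1_cond _ _ _ H0 Huniq).
by rewrite (big_D1_cond _ _ _ H0 Huniq).
Qed.

Lemma R1_shift e0 Q s g : e0 \in gamma -> R1 e0 Q (s + delta N e0 g) = R1 e0 Q s.
Proof.
move=> H0; rewrite /R1 big_seq_cond [RHS]big_seq_cond; apply: eq_big => e.
  by rewrite Sb_shift.
move=> /andP [He /andP [Hne /andP [HS _]]].
have Hg1 : in_g1 gamma e by case/asboolP: HS.
by rewrite (dsig_hat s g H0 Hg1 (Hpe Hg1)) (negbTE Hne) addr0.
Qed.

Lemma R2_shift e0 Q s g : e0 \in gamma -> R2 e0 Q (s + delta N e0 g) = R2 e0 Q s.
Proof.
move=> H0; rewrite /R2 big_seq_cond [RHS]big_seq_cond; apply: eq_big => e.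
  by rewrite Sb_shift.
move=> /andP [He /andP [Hne /andP [HS _]]].
have Hg1 : in_g1 gamma e by case/asboolP: HS.
by rewrite (dsig_hat s g H0 Hg1 (Hpe Hg1)) (sig_hat s g H0 He) (negbTE Hne) !addr0.
Qed.

Lemma R1_Q e0 Q Q' s : (forall e, e != e0 -> Q e = Q' e) -> R1 e0 Q s = R1 e0 Q' s.
Proof.
move=> HQ; rewrite /R1; apply: eq_bigl => e.
by case: (eqVneq e e0) => //= Hne; rewrite HQ.
Qed.

Lemma R2_Q e0 Q Q' s : (forall e, e != e0 -> Q e = Q' e) -> R2 e0 Q s = R2 e0 Q' s.
Proof.
move=> HQ; rewrite /R2; apply: eq_bigl => e.
by case: (eqVneq e e0) => //= Hne; rewrite HQ.
Qed.

Definition Zs (f : config n N -> R[i]) := \sum_(s : config n N) (weight rho beta kappa s)%:C * f s.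

Lemma avg (f : config n N -> R[i]) e0 :
  (n%:R : R[i]) * \sum_(s : config n N) f s =
  \sum_(s : config n N) \sum_(g : 'Z_n) f (s + delta N e0 g).
Proof.
rewrite [RHS]exchange_big /=.
rewrite [RHS](eq_bigr (fun g => \sum_(s : config n N) f s)); last first.
  by move=> g _; symmetry; rewrite (reindex_inj (addIr (delta N e0 g))).
have Hc : #|'Z_n| = n by rewrite card_ord Zp_cast.
by rewrite sumr_const Hc mulr_natl.
Qed.

Lemma step_s Q x k b0 s : (x, k, b0) \in gamma -> ~~ Q (x, k, b0) ->
  let e0 := (x, k, b0) in let Q' := [pred e | (e == e0) || Q e] in
  \sum_(g : 'Z_n) (weight rho beta kappa (s + delta N e0 g))%:C * Fq Q (s + delta N e0 g) =
  \sum_(g : 'Z_n) (weight rho beta kappa (s + delta N e0 g))%:C * Fq Q' (s + delta N e0 g).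
Proof.
move=> H0 HQ e0 Q'.
have HQQ : forall e, e != e0 -> Q e = Q' e by move=> e He; rewrite /Q' /= (negbTE He).
have HQ'0 : Q' e0 = true by rewrite /Q' /= eqxx.
have Hdec : forall Q1 g, Fq Q1 (s + delta N e0 g) =
   rho ((if Sb s e0 && ~~ Q1 e0 then dsig (s + delta N e0 g) (pe e0) else 0) + R1 e0 Q1 s) *
   ((if Sb s e0 && Q1 e0 then theta rho beta kappa (sig_at (s + delta N e0 g) e0 - dsig (s + delta N e0 g) (pe e0)) else 1)
    * R2 e0 Q1 s).
  by move=> Q1 g; rewrite (Fq_decomp _ _ H0) Sb_shift // R1_shift // R2_shift.
under eq_bigr do rewrite Hdec.
under [RHS]eq_bigr do rewrite Hdec.
rewrite -(R1_Q s HQQ) -(R2_Q s HQQ) HQ'0 (negbTE HQ) /=.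
case HS: (Sb s e0) => /=; last by [].
have Hg1 : in_g1 gamma e0 by case/asboolP: HS.
set h := dsig s (pe e0); set sg := sig_at s e0.
have Hd : forall g, dsig (s + delta N e0 g) (pe e0) = h + g.
  by move=> g; rewrite (dsig_hat s g H0 Hg1 (Hpe Hg1)) eqxx.
have Hs : forall g, sig_at (s + delta N e0 g) e0 = sg + g.
  by move=> g; rewrite (sig_hat s g H0 H0) eqxx.
have Ht : forall g, sig_at (s + delta N e0 g) e0 - dsig (s + delta N e0 g) (pe e0) = sg - h.
  by move=> g; rewrite Hd Hs opprD addrACA subrr addr0.
set r1 := R1 e0 Q s; set r2 := R2 e0 Q s.
transitivity ((\sum_(g : 'Z_n) (weight rho beta kappa (s + delta N e0 g))%:C * rho (h + g)) * (rho r1 * r2)).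
  rewrite mulr_suml; apply: eq_bigr => g _.
  by rewrite Hd Hhom mul1r !mulrA.
transitivity ((theta rho beta kappa (sg - h) * \sum_(g : 'Z_n) (weight rho beta kappa (s + delta N e0 g))%:C) * (rho r1 * r2)).
  by rewrite (key_sum H0 HS).
rewrite mulr_sumr mulr_suml; apply: eq_bigr => g _.
by rewrite Ht add0r; ring.
Qed.

Lemma step Q x k b0 : (x, k, b0) \in gamma -> ~~ Q (x, k, b0) ->
  Zs (Fq Q) = Zs (Fq [pred e | (e == (x, k, b0)) || Q e]).
Proof.
move=> H0 HQ.
have Hn0 : (n%:R : R[i]) != 0 by rewrite pnatr_eq0; case: n Hn.
apply: (mulfI Hn0); rewrite /Zs !(avg _ (x, k, b0)).
by apply: eq_bigr => s _; apply: step_s.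
Qed.

Lemma Fq_ext Q Q' s : Q =1 Q' -> Fq Q s = Fq Q' s.
Proof.
by move=> HQ; rewrite /Fq; congr (rho _ * _); apply: eq_bigl => e; rewrite HQ.
Qed.

Lemma Zs_ext Q Q' : Q =1 Q' -> Zs (Fq Q) = Zs (Fq Q').
Proof. by move=> HQ; apply: eq_bigr => s _; rewrite (Fq_ext s HQ). Qed.

Definition def_edge : oedge := ([ffun => 0], ord0, true).

Lemma all_steps m : Zs (Fq pred0) = Zs (Fq [pred e | e \in take m gamma]).
Proof.
elim: m => [|m IH].
  by apply: Zs_ext => e; rewrite take0.
case: (ltnP m (size gamma)) => Hm; last first.
  by rewrite take_oversize ?(leqW Hm) // IH take_oversize.
rewrite IH (take_nth def_edge Hm).
have Hu : uniq (rcons (take m gamma) (nth def_edge gamma m)).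
  by rewrite -(take_nth def_edge Hm) take_uniq // Huniq.
rewrite rcons_uniq in Hu; case/andP: Hu => Hnot _.
have Hin : nth def_edge gamma m \in gamma by apply: mem_nth.
move: Hnot Hin; case: (nth def_edge gamma m) => [[x k] b] Hnot Hin.
rewrite (step Hin) //.
by apply: Zs_ext => e; rewrite /= mem_rcons inE.
Qed.
End Main.

Unset Implicit Arguments.

Theorem mainTheorem18 (R : realType) (n N : nat) (rho : 'Z_n -> R[i])
    (beta kappa : R) (gamma : seq oedge) (pe : oedge -> plaq) :
  (1 < n)%N ->
  (* rho : a faithful unitary one-dimensional representation of Z_n *)
  (forall a b : 'Z_n, rho (a + b) = rho a * rho b) ->
  (forall g : 'Z_n, `|rho g| = 1) ->
  injective rho ->
  0 <= beta -> 0 <= kappa ->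
  (* gamma is a simple loop in E_N *)
  simple_loop gamma ->
  (forall e, e \in gamma -> in_EN N e) ->
  (* \partial \hat\partial gamma \subseteq E_N *)
  (forall e p e', e \in gamma -> hatbd e p -> e' \in bd p -> in_EN N e') ->
  (* p_e \in \hat\partial e for e \in gamma_1 *)
  (forall e, in_g1 gamma e -> hatbd e (pe e)) ->
  @expect R n N rho beta kappa
    (fun s => rho (\sum_(e <- gamma | `[< in_g1 gamma e /\ ~ in_gprime gamma s e >])
                     dsig s (pe e)))
  = @expect R n N rho beta kappa
    (fun s => \prod_(e <- gamma | `[< in_g1 gamma e /\ ~ in_gprime gamma s e >])
                 theta rho beta kappa (sig_at s e - dsig s (pe e))).
Proof.
move=> Hn Hhom Hnorm Hinj Hb Hk Hsl HEg Hbd Hpe.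
have E := all_steps beta kappa Hn Hhom Hnorm Hsl HEg Hbd Hpe (size gamma).
rewrite take_size in E.
rewrite /expect; congr (_ / _).
transitivity (@Zs R n N rho beta kappa (@Fq R n N rho beta kappa gamma pe pred0)).
  apply: eq_bigr => s _; congr (_ * _).
  rewrite /Fq [X in _ * X]big1 ?mulr1; last by move=> e; rewrite andbF.
  by congr (rho _); apply: eq_bigl => e; rewrite andbT.
rewrite E; apply: eq_bigr => s _; congr (_ * _).
rewrite /Fq big_seq_cond big1 ?(Hhom, rho0 Hhom Hnorm) ?mul1r; last first.
  by move=> e /andP [H /andP [_ /negP []]]; exact: H.
rewrite big_seq_cond [RHS]big_seq_cond; apply: eq_bigl => e.
by rewrite /= /Sb; case: (e \in gamma); rewrite /= ?andbT ?andbF.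
Qed.
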